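(* Let $u = v$ be a context equation over a ranked signature $\Sigma$ whose letters have maximal arity $k$. Then (1) for every solution $\sigma$ of $u=v$ there is a solution $\sigma'$ that is a simpler equivalent of $\sigma$ such that for each $k'=0,1,\dots,k$, $\sigma'$ uses at most one letter of arity $k'$ that does not occur in $u=v$; (2) for every solution $\sigma$ there exists a solution $\sigma'$ that uses only unary letters occurring in $u = v$ and satisfies $|\sigma'(u)|\le|\sigma(u)|$.
   Context: $\Omega$ is a special constant not in $\Sigma$; context variables have arity $1$, variables arity $0$. Ground terms are finite ordered trees over $\Sigma$ with each node labelled $f$ having $\mathrm{ar}(f)$ children; ground contexts are ground terms over $\Sigma\cup\{\Omega\}$ with exactly one $\Omega$; $st$ replaces $\Omega$ in the ground context $s$ by $t$. Terms are well-formed trees over $\Sigma$, variables and context variables; a context equation is $u=v$ with $u,v$ terms. A substitution $\sigma$ assigns a ground context to each context variable and a ground term to each variable, extended by $\sigma(a)=a$, $\sigma(f(t_1,\dots,t_m))=f(\sigma(t_1),\dots,\sigma(t_m))$, $\sigma(Xt)=\sigma(X)\sigma(t)$; it is a solution if $\sigma(u)=\sigma(v)$. A letter is used by $\sigma$ if it occurs in some $\sigma(X)$ or $\sigma(x)$. For solutions $\sigma,\sigma'$, $\sigma'$ is a simpler equivalent of $\sigma$ if there is an arity-preserving map $h$ on letters such that each $\sigma'(X)$, $\sigma'(x)$ is obtained from $\sigma(X)$, $\sigma(x)$ by replacing every letter $a$ by $h(a)$. $|\cdot|$ is the number of nodes. Unary letters have arity $1$. *)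

(* Defs.v *)
From mathcomp Require Import all_boot.
Set Implicit Arguments. Unset Strict Implicit. Unset Printing Implicit Defensive.

(* Ground trees over a signature S extended with the hole constant Omega. *)
Inductive gtree (S : Type) : Type :=
| GHole : gtree S
| GNode : S -> seq (gtree S) -> gtree S.
Arguments GHole {S}.

Section Ground.
Variables (S : Type) (ar : S -> nat).

Fixpoint gwf (t : gtree S) : Prop :=
  match t with
  | GHole => True
  | GNode f ts => size ts = ar f /\
      (fix go (l : seq (gtree S)) : Prop :=
         match l with [::] => True | s :: l' => gwf s /\ go l' end) ts
  end.

Fixpoint holes (t : gtree S) : nat :=
  match t with
  | GHole => 1
  | GNode _ ts => sumn (map holes ts)
  end.

Fixpoint gsize (t : gtree S) : nat :=
  match t with
  | GHole => 1
  | GNode _ ts => (sumn (map gsize ts)).+1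
  end.

Fixpoint gocc (a : S) (t : gtree S) : Prop :=
  match t with
  | GHole => False
  | GNode f ts => f = a \/
      (fix go (l : seq (gtree S)) : Prop :=
         match l with [::] => False | s :: l' => gocc a s \/ go l' end) ts
  end.

Fixpoint plug (s t : gtree S) : gtree S :=
  match s with
  | GHole => t
  | GNode f ss => GNode f (map (fun s' => plug s' t) ss)
  end.

Definition is_ground_term (t : gtree S) : Prop := gwf t /\ holes t = 0.
Definition is_ground_ctx (t : gtree S) : Prop := gwf t /\ holes t = 1.
End Ground.

Fixpoint rename (S : Type) (h : S -> S) (t : gtree S) : gtree S :=
  match t with
  | GHole => GHole
  | GNode f ts => GNode (h f) (map (rename h) ts)
  end.

Inductive term (S V C : Type) : Type :=
| TVar : V -> term S V C
| TCApp : C -> term S V C -> term S V C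
| TNode : S -> seq (term S V C) -> term S V C.

Section Terms.
Variables (S V C : Type) (ar : S -> nat).

Fixpoint twf (t : term S V C) : Prop :=
  match t with
  | TVar _ => True
  | TCApp _ t' => twf t'
  | TNode f ts => size ts = ar f /\
      (fix go (l : seq (term S V C)) : Prop :=
         match l with [::] => True | s :: l' => twf s /\ go l' end) ts
  end.

Fixpoint tocc (a : S) (t : term S V C) : Prop :=
  match t with
  | TVar _ => False
  | TCApp _ t' => tocc a t'
  | TNode f ts => f = a \/
      (fix go (l : seq (term S V C)) : Prop :=
         match l with [::] => False | s :: l' => tocc a s \/ go l' end) ts
  end.

Fixpoint tvocc (x : V) (t : term S V C) : Prop :=
  match t with
  | TVar y => y = x
  | TCApp _ t' => tvocc x t'
  | TNode _ ts =>
      (fix go (l : seq (term S V C)) : Prop :=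
         match l with [::] => False | s :: l' => tvocc x s \/ go l' end) ts
  end.

Fixpoint tcocc (X : C) (t : term S V C) : Prop :=
  match t with
  | TVar _ => False
  | TCApp Y t' => Y = X \/ tcocc X t'
  | TNode _ ts =>
      (fix go (l : seq (term S V C)) : Prop :=
         match l with [::] => False | s :: l' => tcocc X s \/ go l' end) ts
  end.

Record subst : Type := Subst { sv : V -> gtree S; sc : C -> gtree S }.

Definition valid_subst (sg : subst) : Prop :=
  (forall x, is_ground_term ar (sv sg x)) /\ (forall X, is_ground_ctx ar (sc sg X)).

Fixpoint apply_subst (sg : subst) (t : term S V C) : gtree S :=
  match t with
  | TVar x => sv sg x
  | TCApp X t' => plug (sc sg X) (apply_subst sg t')
  | TNode f ts => GNode f (map (apply_subst sg) ts)
  end.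

Definition is_solution (u v : term S V C) (sg : subst) : Prop :=
  valid_subst sg /\ apply_subst sg u = apply_subst sg v.

Definition eq_letter (u v : term S V C) (a : S) : Prop := tocc a u \/ tocc a v.

Definition uses (u v : term S V C) (sg : subst) (a : S) : Prop :=
  (exists x, (tvocc x u \/ tvocc x v) /\ gocc a (sv sg x)) \/
  (exists X, (tcocc X u \/ tcocc X v) /\ gocc a (sc sg X)).

Definition simpler_equiv (sg sg' : subst) : Prop :=
  exists h : S -> S, (forall a, ar (h a) = ar a) /\
    (forall x, sv sg' x = rename h (sv sg x)) /\
    (forall X, sc sg' X = rename h (sc sg X)).
End Terms.

(* Main.v *)
From Stdlib Require Import ClassicalEpsilon Classical.
Require Import Defs.
From mathcomp Require Import all_boot.

Set Implicit Arguments. Unset Strict Implicit.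

Section Aux.
Variables (S V C : Type) (ar : S -> nat).

Definition gtree_ind2 (P : gtree S -> Prop) (h0 : P GHole)
  (hn : forall f ts, (forall t, List.In t ts -> P t) -> P (GNode f ts)) :
  forall t, P t :=
  fix IH t := match t with
  | GHole => h0
  | GNode f ts => hn f ts
     ((fix go (l : seq (gtree S)) : forall x, List.In x l -> P x :=
        match l with
        | [::] => fun x H => False_ind _ H
        | y :: l' => fun x H => match H with
                     | or_introl e => eq_ind y P (IH y) x e
                     | or_intror H' => go l' x H' end
        end) ts)
  end.

Definition term_ind2 (P : term S V C -> Prop) (h0 : forall x, P (TVar _ _ x))
  (hc : forall X t, P t -> P (TCApp X t))
  (hn : forall f ts, (forall t, List.In t ts -> P t) -> P (TNode f ts)) :
  forall t, P t :=
  fix IH t := match t with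
  | TVar x => h0 x
  | TCApp X t' => hc X t' (IH t')
  | TNode f ts => hn f ts
     ((fix go (l : seq (term S V C)) : forall x, List.In x l -> P x :=
        match l with
        | [::] => fun x H => False_ind _ H
        | y :: l' => fun x H => match H with
                     | or_introl e => eq_ind y P (IH y) x e
                     | or_intror H' => go l' x H' end
        end) ts)
  end.

Lemma map_ext_In (A B : Type) (F G : A -> B) l :
  (forall x, List.In x l -> F x = G x) -> map F l = map G l.
Proof. elim: l => //= a l IH H; rewrite H ?IH //; [move=> x Hx; apply: H; right | left]; done. Qed.

Lemma gwf_node f ts : gwf ar (GNode f ts) <->
  size ts = ar f /\ forall t, List.In t ts -> gwf ar t.
Proof.
simpl; split => -[-> H]; split => //; clear f.
- elim: ts H => //= a l IH [Ha Hl] t [<-|Ht] //; exact: IH.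
- elim: ts H => //= a l IH H; split; [apply: H; left | apply: IH => t Ht; apply: H; right]; done.
Qed.

Lemma gocc_node (a f : S) (ts : seq (gtree S)) : gocc a (GNode f ts) <->
  f = a \/ exists t, List.In t ts /\ gocc a t.
Proof.
simpl; split => -[->|H]; try by left.
- right; elim: ts H => //= b l IH [Hb|Hl]; first by exists b; split => //; left.
  by case: (IH Hl) => t [Ht Ho]; exists t; split => //; right.
- right; case: H => t [Ht Ho]; elim: ts Ht => //= b l IH [->|Ht]; [by left | right; exact: IH].
Qed.

Lemma tocc_node (a f : S) (ts : seq (term S V C)) : tocc a (TNode f ts) <->
  f = a \/ exists t, List.In t ts /\ tocc a t.
Proof.
simpl; split => -[->|H]; try by left.
- right; elim: ts H => //= b l IH [Hb|Hl]; first by exists b; split => //; left.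
  by case: (IH Hl) => t [Ht Ho]; exists t; split => //; right.
- right; case: H => t [Ht Ho]; elim: ts Ht => //= b l IH [->|Ht]; [by left | right; exact: IH].
Qed.

Lemma apply_F (F : gtree S -> gtree S) (P : S -> Prop) (sg : subst S V C) :
  (forall s t, F (plug s t) = plug (F s) (F t)) ->
  (forall f ts, P f -> F (GNode f ts) = GNode f (map F ts)) ->
  forall u, (forall f, tocc f u -> P f) ->
  apply_subst (Subst (fun x => F (sv sg x)) (fun X => F (sc sg X))) u
  = F (apply_subst sg u).
Proof.
move=> hp hn; elim/term_ind2 => [x|X t IH|f ts IH] Ho //=.
- by rewrite IH // hp.
- rewrite hn; last by apply: Ho; apply/tocc_node; left.
  congr GNode; rewrite -map_comp; apply: map_ext_In => t Ht /=.
  apply: IH => // g Hg; apply: Ho; apply/tocc_node; right; by exists t.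
Qed.

End Aux.

Fixpoint del (S : Type) (D : S -> bool) (t : gtree S) : gtree S :=
  match t with
  | GHole => GHole
  | GNode f ts => if D f then
      match ts with [:: t'] => del D t' | _ => GNode f (map (del D) ts) end
      else GNode f (map (del D) ts)
  end.

Section Aux2.
Variables (S : Type) (ar : S -> nat).

Lemma del_plug (D : S -> bool) s t : del D (plug s t) = plug (del D s) (del D t).
Proof.
elim/gtree_ind2: s => [//|f ss IH] /=.
have E : map (del D) (map (fun s => plug s t) ss) = map (fun s => plug s (del D t)) (map (del D) ss).
  rewrite -!map_comp; apply: map_ext_In => x Hx /=; exact: IH.
case: (D f) => //=; last by rewrite E.
case: ss IH E => [|s1 [|s2 ss]] IH E //=.
- by apply: IH; left.
- by move: E => /= [-> -> ->].
Qed.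

Lemma rename_plug (h : S -> S) s t : rename h (plug s t) = plug (rename h s) (rename h t).
Proof.
elim/gtree_ind2: s => [//|f ss IH] /=; congr GNode.
rewrite -!map_comp; apply: map_ext_In => x Hx /=; exact: IH.
Qed.

Lemma sumn_le (A : Type) (F G : A -> nat) l :
  (forall x, List.In x l -> F x <= G x) -> sumn (map F l) <= sumn (map G l).
Proof.
elim: l => //= a l IH H; apply: leq_add; [apply: H; left | apply: IH => x Hx; apply: H; right]; done.
Qed.

Lemma del_size (D : S -> bool) t : gsize (del D t) <= gsize t.
Proof.
elim/gtree_ind2: t => [//|f ts IH] /=.
have E : sumn (map (@gsize S) (map (del D) ts)) <= sumn (map (@gsize S) ts).
  rewrite -map_comp; apply: sumn_le => x Hx /=; exact: IH.
case: (D f) => //=; case: ts IH E => [|s1 [|s2 ss]] IH E //=.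
rewrite addn0; apply: leq_trans (IH s1 _) _; [by left | by []].
Qed.

Lemma del_wf (D : S -> bool) (hD : forall f, D f -> ar f = 1) t :
  gwf ar t -> gwf ar (del D t) /\ holes (del D t) = holes t.
Proof.
elim/gtree_ind2: t => [//|f ts IH] /gwf_node [Hs Hw] /=.
have [Ew Eh] : (forall x, List.In x (map (del D) ts) -> gwf ar x) /\
  sumn (map (@holes S) (map (del D) ts)) = sumn (map (@holes S) ts).
  split.
  - move=> x; elim: ts IH Hw {Hs} => //= a l IHl IH Hw [<-|Hx].
      by case: (IH a (or_introl erefl) (Hw _ (or_introl erefl))).
    by apply: IHl => // y Hy; [apply: IH; right | apply: Hw; right].
  - rewrite -map_comp; congr sumn; apply: map_ext_In => x Hx /=.
    by case: (IH x Hx (Hw x Hx)).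
have G : gwf ar (GNode f (map (del D) ts)) by apply/gwf_node; rewrite size_map.
case HDf: (D f); last by split.
move: (hD f HDf) => Ha; rewrite Ha in Hs.
case: ts Hs IH Hw Ew Eh G => [|s1 [|s2 ss]] //= _ IH Hw Ew Eh G.
by rewrite -Eh addn0; case: G => _ [].
Qed.

Lemma in_map_seq (A B : Type) (F : A -> B) l x :
  List.In x (map F l) -> exists y, List.In y l /\ x = F y.
Proof.
elim: l => //= a l IH [<-|H]; first by exists a; split => //; left.
by case: (IH H) => y [Hy ->]; exists y; split => //; right.
Qed.

Lemma del_occ (D : S -> bool) (hD : forall f, D f -> ar f = 1) a t :
  gwf ar t -> gocc a (del D t) -> D a = false.
Proof.
elim/gtree_ind2: t => [//|f ts IH] /gwf_node [Hs Hw] /=.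
case HDf: (D f).
  move: (hD f HDf) => Ha; rewrite Ha in Hs.
  case: ts Hs IH Hw => [|s1 [|s2 ss]] //= _ IH Hw.
  by apply: IH; [left | apply: Hw; left].
move/gocc_node => [<-//|[x [Hx Ho]]].
case: (in_map_seq Hx) => y [Hy ->] in Ho *.
exact: IH y Hy (Hw y Hy) Ho.
Qed.

Lemma rename_wf (h : S -> S) (hh : forall a, ar (h a) = ar a) t :
  gwf ar t -> gwf ar (rename h t) /\ holes (rename h t) = holes t.
Proof.
elim/gtree_ind2: t => [//|f ts IH] /gwf_node [Hs Hw] /=.
split.
- apply/gwf_node; rewrite size_map hh; split => // x.
  elim: ts IH Hw {Hs} => //= b l IHl IH Hw [<-|Hx].
    by case: (IH b (or_introl erefl) (Hw _ (or_introl erefl))).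
  by apply: IHl => // y Hy; [apply: IH; right | apply: Hw; right].
- rewrite -map_comp; congr sumn; apply: map_ext_In => x Hx /=.
  by case: (IH x Hx (Hw x Hx)).
Qed.

Lemma rename_occ (h : S -> S) a t :
  gocc a (rename h t) -> exists b, gocc b t /\ h b = a.
Proof.
elim/gtree_ind2: t => [//|f ts IH] /= /gocc_node [<-|[x [Hx Ho]]].
  by exists f; split => //; apply/gocc_node; left.
case: (in_map_seq Hx) => y [Hy E]; subst x.
case: (IH y Hy Ho) => b [Hb Eb]; exists b; split => //.
by apply/gocc_node; right; exists y.
Qed.
End Aux2.

Lemma uses_F (S V C : Type) (ar : S -> nat) (u v : term S V C) (sg : subst S V C)
  (F : gtree S -> gtree S) a :
  valid_subst ar sg ->
  uses u v (Subst (fun x => F (sv sg x)) (fun X => F (sc sg X))) a ->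
  exists t, gwf ar t /\ gocc a (F t).
Proof.
move=> [Hv Hc] [[x [_ H]]|[X [_ H]]].
- by exists (sv sg x); split => //; case: (Hv x).
- by exists (sc sg X); split => //; case: (Hc X).
Qed.

Theorem lemma3p7 (S V C : Type) (ar : S -> nat) (k : nat)
  (hk : forall a : S, ar a <= k)
  (u v : term S V C) (hu : twf ar u) (hv : twf ar v) :
  (forall sg : subst S V C, is_solution ar u v sg ->
     exists sg' : subst S V C,
       is_solution ar u v sg' /\ simpler_equiv ar sg sg' /\
       (forall k', k' <= k -> forall a b : S,
          uses u v sg' a -> uses u v sg' b ->
          ~ eq_letter u v a -> ~ eq_letter u v b ->
          ar a = k' -> ar b = k' -> a = b)) /\
  (forall sg : subst S V C, is_solution ar u v sg ->
     exists sg' : subst S V C,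
       is_solution ar u v sg' /\
       (forall a : S, ar a = 1 -> uses u v sg' a -> eq_letter u v a) /\
       gsize (apply_subst sg' u) <= gsize (apply_subst sg u)).
Proof.
have Eu : forall f, tocc f u -> eq_letter u v f by move=> f H; left.
have Ev : forall f, tocc f v -> eq_letter u v f by move=> f H; right.
split.
- move=> sg [[Hsv Hsc] Heq].
  pose P (n : nat) := fun b => ar b = n /\ ~ eq_letter u v b.
  pose h a := if excluded_middle_informative (eq_letter u v a) then a
              else epsilon (inhabits a) (P (ar a)).
  have hh : forall a, ar (h a) = ar a.
    move=> a; rewrite /h; case: excluded_middle_informative => // nE.
    by case: (epsilon_spec (inhabits a) (P (ar a)) (ex_intro _ a (conj erefl nE))).
  have hid : forall a, eq_letter u v a -> h a = a.
    by move=> a Ea; rewrite /h; case: excluded_middle_informative.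
  have hnode : forall f ts, eq_letter u v f ->
      rename h (GNode f ts) = GNode f (map (rename h) ts).
    by move=> f ts Ef /=; rewrite hid.
  have hrep : forall a, uses u v (Subst (fun x => rename h (sv sg x))
                                   (fun X => rename h (sc sg X))) a ->
      ~ eq_letter u v a -> a = epsilon (inhabits a) (P (ar a)).
    move=> a Ua nEa.
    case: (@uses_F S V C ar u v sg (rename h) a (conj Hsv Hsc) Ua) => t [_ Ho].
    case: (rename_occ Ho) => c [_ Ec].
    move: Ec; rewrite /h; case: excluded_middle_informative => [Ec /= Ec'|nEc /= Ec].
      by rewrite -Ec' in nEa.
    have Hs := epsilon_spec (inhabits c) (P (ar c)) (ex_intro _ c (conj erefl nEc)).
    have Har : ar a = ar c by rewrite -Ec; case: Hs.
    rewrite Har -{1}Ec; apply: epsilon_inh_irrelevance; by exists c.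
  exists (Subst (fun x => rename h (sv sg x)) (fun X => rename h (sc sg X))).
  split; [split; [split|] | split].
  + move=> x; case: (Hsv x) => Hw H0; case: (rename_wf hh Hw) => ? E.
    by split => //=; rewrite E.
  + move=> X; case: (Hsc X) => Hw H0; case: (rename_wf hh Hw) => ? E.
    by split => //=; rewrite E.
  + rewrite (apply_F sg (rename_plug h) hnode Eu) (apply_F sg (rename_plug h) hnode Ev).
    by rewrite Heq.
  + by exists h.
  + move=> k' _ a b Ua Ub nEa nEb Ha Hb.
    rewrite (hrep a Ua nEa) (hrep b Ub nEb) Ha Hb.
    apply: epsilon_inh_irrelevance; exists a; split => //.
- move=> sg [[Hsv Hsc] Heq].
  pose D a := if excluded_middle_informative (ar a = 1 /\ ~ eq_letter u v a)
              then true else false.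
  have hD : forall f, D f -> ar f = 1.
    by move=> f; rewrite /D; case: excluded_middle_informative => // -[].
  have hnode : forall f ts, eq_letter u v f ->
      del D (GNode f ts) = GNode f (map (del D) ts).
    move=> f ts Ef /=; rewrite /D; case: excluded_middle_informative => //.
    by case.
  exists (Subst (fun x => del D (sv sg x)) (fun X => del D (sc sg X))).
  have Au := apply_F sg (@del_plug S D) hnode Eu.
  split; [split; [split|] | split].
  + move=> x; case: (Hsv x) => Hw H0; case: (del_wf hD Hw) => ? E.
    by split => //=; rewrite E.
  + move=> X; case: (Hsc X) => Hw H0; case: (del_wf hD Hw) => ? E.
    by split => //=; rewrite E.
  + by rewrite Au (apply_F sg (@del_plug S D) hnode Ev) Heq.
  + move=> a Ha Ua.
    case: (@uses_F S V C ar u v sg (del D) a (conj Hsv Hsc) Ua) => t [Hw Ho].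
    move: (del_occ hD Hw Ho); rewrite /D; case: excluded_middle_informative => // nD _.
    by apply: NNPP => nE; apply: nD.
  + by rewrite Au; apply: del_size.
Qed.
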